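(* Let $\tau\in\mathscr C^r(\mathbb{S}^1,\mathbb{R})$ and $R>\|\tau'\|_\infty$. If $\widetilde R>0$ satisfies $\vartheta_R-\vartheta_\tau\ge\widetilde R$, then $\widetilde{\mathcal N}_{\widetilde R}(n)\le\mathcal N(\tau,R;n)$ for all $n\ge1$; if $\widetilde R>\vartheta_R+\vartheta_\tau$, then $\mathcal N(\tau,R;n)\le\widetilde{\mathcal N}_{\widetilde R}(n)$ for all $n\ge1$. Consequently, $\mathcal N(\tau)=1$ if and only if $\lim_{n\to\infty}n^{-1}\log\widetilde{\mathcal N}_{\widetilde R}(n)=0$ for every $\widetilde R>0$.
   Context: $\mathbb{S}^1=\mathbb{R}/\mathbb{Z}$, $\mathbb{T}^2=\mathbb{S}^1\times\mathbb{S}^1$, $r\ge2$. $E$ is a $\mathscr C^r$ expanding circle map of degree $\ell\ge2$, $1<\lambda\le E'\le\Lambda$, $0$ a fixed point. $f(x,s)=(E(x),s+\tau(x)\bmod1)$; $\vartheta_\tau=\|\tau'\|_\infty/(\lambda-1)$; for $R>0$, $\vartheta_R=R/(\lambda-1)$ and $\mathscr K_R=\{(\xi,\eta):|\eta|\le\vartheta_R|\xi|\}$; $\mathcal N(\tau,R;n)=\sup_{z\in\mathbb{T}^2}\sup_v\#\{\zeta\in f^{-n}(z):v\in Df^n(\zeta)\mathscr K_R\}$ (sup over unit vectors $v$), and $\mathcal N(\tau)=\lim_n\mathcal N(\tau,R;n)^{1/n}$ (exists, independent of $R>\|\tau'\|_\infty$). Symbolic coding: $\mathcal A=\{0,\dots,\ell-1\}$;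 the points of $E^{-1}(0)$ divide $\mathbb{S}^1$ into half-open intervals $\mathcal I(j)$ each mapped bijectively onto $\mathbb{S}^1$ by $E$; for $\alpha=(\alpha_n,\dots,\alpha_1)\in\mathcal A^n$, $\mathcal I(\alpha)=\bigcap_{i=0}^{n-1}E^{-i}(\mathcal I(\alpha_{n-i}))$, $x_\alpha$ the unique point of $\mathcal I(\alpha)$ with $E^n(x_\alpha)=x$, $[\alpha]_k=(\alpha_k,\dots,\alpha_1)$; for infinite sequences $\alpha=(\dots,\alpha_2,\alpha_1)\in\mathcal A^\infty$ the truncations $[\alpha]_k$ are defined likewise, and a finite word $\alpha\in\mathcal A^n$ is identified with any infinite sequence extending it where needed. $S(x;\alpha)=\sum_{k=1}^\infty\tau'(x_{[\alpha]_k})/(E^k)'(x_{[\alpha]_k})$. For $\widetilde R>0$, $\widetilde{\mathcal N}_{\widetilde R}(n)=\sup_{y\in\mathbb{S}^1,\eta\in\mathbb{R}}\#\{\alpha\in\mathcal A^n: |\eta-S(y;\alpha)|\le\widetilde R\,((E^n)'(y_\alpha))^{-1}\}$, where for $\alpha\in\mathcal A^n$ the value $S(y;\alpha)$ is understood as $S(y;\tilde\alpha)$ for an arbitrary fixed extension $\tilde\alpha\in\mathcal A^\infty$ of $\alpha$. *)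

(* Defs.v *)
From Stdlib Require Import Reals Lra List ClassicalEpsilon.
Open Scope R_scope.

Fixpoint Cr (r : nat) (f : R -> R) : Prop :=
  match r with
  | O => continuity f
  | S k => exists f', (forall x, derivable_pt_lim f x (f' x)) /\ Cr k f'
  end.

Definition supnorm (g : R -> R) : R :=
  epsilon (inhabits 0) (fun m => is_lub (fun y => exists x, y = Rabs (g x)) m).

(* cardinality of a finite set (0 if not finite) *)
Definition fcard {T : Type} (P : T -> Prop) : nat :=
  match excluded_middle_informative
          (exists l : list T, NoDup l /\ forall x, In x l <-> P x) with
  | left H => length (proj1_sig (constructive_indefinite_description _ H))
  | right _ => 0%nat
  end.

(* supremum (= maximum) of a nat-valued function over a domain D (0 if none) *)
Definition natsup {A : Type} (D : A -> Prop) (F : A -> nat) : nat :=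
  match excluded_middle_informative
          (exists m : nat, (forall a, D a -> (F a <= m)%nat) /\
                           exists a, D a /\ F a = m) with
  | left H => proj1_sig (constructive_indefinite_description _ H)
  | right _ => 0%nat
  end.

(* S^1 = R/Z is represented by the fundamental domain [0,1);
   a circle map is given by a lift E : R -> R, acting on S^1 as frac o E. *)
Definition in_S1 (x : R) : Prop := 0 <= x < 1.
Definition Ec (E : R -> R) (x : R) : R := frac_part (E x).

Definition f_skew (E tau : R -> R) (p : R * R) : R * R :=
  (frac_part (E (fst p)), frac_part (snd p + tau (fst p))).

Definition Df (dE dtau : R -> R) (p : R * R) (w : R * R) : R * R :=
  (dE (fst p) * fst w, dtau (fst p) * fst w + snd w).

Fixpoint Dfn (E tau dE dtau : R -> R) (n : nat) (p w : R * R) : R * R :=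
  match n with
  | O => w
  | S m => Dfn E tau dE dtau m (f_skew E tau p) (Df dE dtau p w)
  end.

Definition theta (lam K : R) : R := K / (lam - 1).

Definition cone (th : R) (w : R * R) : Prop := Rabs (snd w) <= th * Rabs (fst w).

Definition Ncount (E tau dE dtau : R -> R) (lam K : R) (n : nat) (z v : R * R) : nat :=
  fcard (fun zeta : R * R =>
     in_S1 (fst zeta) /\ in_S1 (snd zeta) /\
     Nat.iter n (f_skew E tau) zeta = z /\
     exists w, cone (theta lam K) w /\ Dfn E tau dE dtau n zeta w = v).

Definition Nf (E tau dE dtau : R -> R) (lam K : R) (n : nat) : nat :=
  natsup (fun zv : (R * R) * (R * R) =>
            in_S1 (fst (fst zv)) /\ in_S1 (snd (fst zv)) /\
            (fst (snd zv)) ^ 2 + (snd (snd zv)) ^ 2 = 1)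
         (fun zv => Ncount E tau dE dtau lam K n (fst zv) (snd zv)).

Definition Ntau_is (E tau dE dtau : R -> R) (lam c : R) : Prop :=
  forall K, supnorm dtau < K ->
    Un_cv (fun n => Rpower (INR (Nf E tau dE dtau lam K n)) (/ INR n)) c.

Definition Ij (E : R -> R) (j : nat) (q : R) : Prop := INR j <= E q < INR j + 1.

(* Infinite sequences alpha = (..., alpha_2, alpha_1) are functions a with a k = alpha_k
   (k >= 1).  p in I([a]_k) = intersection_{i<k} E^{-i}(I(alpha_{k-i})). *)
Definition inI (E : R -> R) (a : nat -> nat) (k : nat) (p : R) : Prop :=
  in_S1 p /\ forall i, (i < k)%nat -> Ij E (a (k - i)%nat) (Nat.iter i (Ec E) p).

Definition xw (E : R -> R) (x : R) (a : nat -> nat) (k : nat) : R :=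
  epsilon (inhabits 0) (fun p => inI E a k p /\ Nat.iter k (Ec E) p = x).

Fixpoint dEn (E dE : R -> R) (k : nat) (p : R) : R :=
  match k with
  | O => 1
  | S m => dE p * dEn E dE m (Ec E p)
  end.

Definition Sterm (E dE dtau : R -> R) (x : R) (a : nat -> nat) (k : nat) : R :=
  dtau (xw E x a k) / dEn E dE k (xw E x a k).
Definition Ssum (E dE dtau : R -> R) (x : R) (a : nat -> nat) : R :=
  epsilon (inhabits 0)
    (fun l => infinite_sum (fun k => Sterm E dE dtau x a (S k)) l).

(* finite words alpha in A^n, as lists [alpha_1; ...; alpha_n] *)
Definition word (ell n : nat) (w : list nat) : Prop :=
  length w = n /\ Forall (fun j => (j < ell)%nat) w.

(* a fixed choice of extension of each finite word to an infinite sequence *)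
Definition ext_ok (ell : nat) (ext : list nat -> nat -> nat) : Prop :=
  forall w, Forall (fun j => (j < ell)%nat) w ->
    (forall k, (1 <= k <= length w)%nat -> ext w k = nth (k - 1) w 0%nat) /\
    (forall k, (1 <= k)%nat -> (ext w k < ell)%nat).

Definition Ntil (E dE dtau : R -> R) (ell : nat) (ext : list nat -> nat -> nat)
    (Rt : R) (n : nat) : nat :=
  natsup (fun ye : R * R => in_S1 (fst ye))
    (fun ye => fcard (fun w : list nat =>
        word ell n w /\
        Rabs (snd ye - Ssum E dE dtau (fst ye) (ext w))
          <= Rt / dEn E dE n (xw E (fst ye) (ext w) n))).

(* Main.v *)
Require Import Defs.
From Stdlib Require Import Reals List.
From Stdlib Require Import Lra Lia ClassicalEpsilon Classical ZArith.
Open Scope R_scope.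

Lemma fcard_eq {T : Type} (P : T -> Prop) (l : list T) :
  NoDup l -> (forall x, In x l <-> P x) -> fcard P = length l.
Proof.
  intros Hn Hi. unfold fcard.
  destruct (excluded_middle_informative _) as [H|H].
  - destruct (constructive_indefinite_description _ H) as [l' [Hn' Hi']]. simpl.
    apply Nat.le_antisymm; apply NoDup_incl_length; auto;
      intros x Hx; [apply Hi; apply Hi' | apply Hi'; apply Hi]; auto.
  - exfalso. apply H. exists l. auto.
Qed.

Definition pick_pre {T U : Type} (P : T -> Prop) (f : T -> U) (u : U) : option T :=
  match excluded_middle_informative (exists x, P x /\ f x = u) with
  | left H => Some (proj1_sig (constructive_indefinite_description _ H))
  | right _ => None
  end.

Lemma pick_pre_spec {T U : Type} (P : T -> Prop) (f : T -> U) u x :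
  pick_pre P f u = Some x -> P x /\ f x = u.
Proof.
  unfold pick_pre. destruct (excluded_middle_informative _) as [H|H]; [|discriminate].
  destruct (constructive_indefinite_description _ H) as [y Hy]. simpl. intro E; inversion E; subst; auto.
Qed.

Lemma pick_pre_some {T U : Type} (P : T -> Prop) (f : T -> U) x :
  P x -> exists y, pick_pre P f (f x) = Some y.
Proof.
  intro Hx. unfold pick_pre. destruct (excluded_middle_informative _) as [H|H].
  - eexists; reflexivity.
  - exfalso; apply H; eauto.
Qed.

Definition optl {T} (o : option T) : list T := match o with Some x => x :: nil | None => nil end.

Lemma flat_pick_nodup {T U : Type} (P : T -> Prop) (f : T -> U) (l : list U) :
  NoDup l -> NoDup (flat_map (fun u => optl (pick_pre P f u)) l).
Proof.
  induction l as [|u l IH]; simpl; intro Hn. constructor.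
  inversion Hn; subst.
  destruct (pick_pre P f u) as [x|] eqn:Hx; simpl; auto.
  constructor; auto.
  rewrite in_flat_map. intros [u' [Hu' Hx']].
  destruct (pick_pre P f u') as [x'|] eqn:Hx''; simpl in Hx'; [|tauto].
  destruct Hx' as [<-|[]]. apply pick_pre_spec in Hx. apply pick_pre_spec in Hx''.
  apply H1. destruct Hx as [_ <-]. destruct Hx'' as [_ <-]. auto.
Qed.

Lemma flat_pick_length {T U : Type} (P : T -> Prop) (f : T -> U) (l : list U) :
  (length (flat_map (fun u => optl (pick_pre P f u)) l) <= length l)%nat.
Proof.
  induction l as [|u l IH]; simpl. lia.
  rewrite length_app. destruct (pick_pre P f u); simpl; lia.
Qed.

Lemma fcard_le {T U : Type} (P : T -> Prop) (Q : U -> Prop) (f : T -> U) (lQ : list U) :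
  NoDup lQ -> (forall u, In u lQ <-> Q u) -> (forall x, P x -> Q (f x)) ->
  (forall x y, P x -> P y -> f x = f y -> x = y) -> (fcard P <= fcard Q)%nat.
Proof.
  intros HnQ HiQ HPQ Hinj.
  set (lP := flat_map (fun u => optl (pick_pre P f u)) lQ).
  rewrite (fcard_eq Q lQ HnQ HiQ).
  rewrite (fcard_eq P lP).
  - apply flat_pick_length.
  - apply flat_pick_nodup; auto.
  - intro x. unfold lP. rewrite in_flat_map. split.
    + intros [u [Hu Hx]]. destruct (pick_pre P f u) eqn:E; simpl in Hx; [|tauto].
      destruct Hx as [<-|[]]. apply pick_pre_spec in E. tauto.
    + intro Hx. exists (f x). split. apply HiQ; auto.
      destruct (pick_pre_some P f x Hx) as [y Hy]. rewrite Hy. simpl.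
      apply pick_pre_spec in Hy. left. apply Hinj; tauto.
Qed.

Lemma fcard_lt_N (N : nat) : fcard (fun m : nat => (m < N)%nat) = N.
Proof.
  rewrite (fcard_eq _ (seq 0 N)). apply length_seq. apply seq_NoDup.
  intro x. rewrite in_seq. lia.
Qed.

Lemma fcard_le_N {T : Type} (P : T -> Prop) (f : T -> nat) (N : nat) :
  (forall x, P x -> (f x < N)%nat) ->
  (forall x y, P x -> P y -> f x = f y -> x = y) -> (fcard P <= N)%nat.
Proof.
  intros H1 H2. rewrite <- (fcard_lt_N N). apply (fcard_le P _ f (seq 0 N)); auto.
  apply seq_NoDup. intro x. rewrite in_seq. lia.
Qed.

Lemma fcard_empty {T : Type} (P : T -> Prop) : (forall x, ~ P x) -> fcard P = 0%nat.
Proof.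
  intro H. rewrite (fcard_eq P nil). auto. constructor. intro x; simpl; split; [tauto|apply H].
Qed.

Lemma natsup_exists {A : Type} (D : A -> Prop) (F : A -> nat) (B : nat) :
  (exists a, D a) -> (forall a, D a -> (F a <= B)%nat) ->
  exists m : nat, (forall a, D a -> (F a <= m)%nat) /\ exists a, D a /\ F a = m.
Proof.
  induction B as [|B IH]; intros [a0 Ha0] HB.
  - exists 0%nat. split. auto. exists a0. split; auto. specialize (HB a0 Ha0). lia.
  - destruct (classic (exists a, D a /\ F a = S B)) as [H|H].
    + exists (S B). auto.
    + apply IH. eauto. intros a Ha. specialize (HB a Ha).
      destruct (Nat.eq_dec (F a) (S B)). exfalso; eauto. lia.
Qed.

Lemma natsup_ge {A : Type} (D : A -> Prop) (F : A -> nat) (B : nat) (a : A) :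
  (forall a, D a -> (F a <= B)%nat) -> D a -> (F a <= natsup D F)%nat.
Proof.
  intros HB Ha. unfold natsup. destruct (excluded_middle_informative _) as [H|H].
  - destruct (proj2_sig (constructive_indefinite_description _ H)) as [Hm _]. auto.
  - exfalso. apply H. eapply natsup_exists; eauto.
Qed.

Lemma natsup_le {A : Type} (D : A -> Prop) (F : A -> nat) (m : nat) :
  (forall a, D a -> (F a <= m)%nat) -> (natsup D F <= m)%nat.
Proof.
  intros HB. unfold natsup. destruct (excluded_middle_informative _) as [H|H].
  - destruct (proj2_sig (constructive_indefinite_description _ H)) as [_ [a [Ha <-]]]. auto.
  - lia.
Qed.

Lemma finite_inj {T U : Type} (P : T -> Prop) (Q : U -> Prop) (f : T -> U) (lQ : list U) :
  NoDup lQ -> (forall u, In u lQ <-> Q u) -> (forall x, P x -> Q (f x)) ->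
  (forall x y, P x -> P y -> f x = f y -> x = y) ->
  exists lP, NoDup lP /\ (forall x, In x lP <-> P x).
Proof.
  intros HnQ HiQ HPQ Hinj.
  exists (flat_map (fun u => optl (pick_pre P f u)) lQ). split.
  - apply flat_pick_nodup; auto.
  - intro x. rewrite in_flat_map. split.
    + intros [u [Hu Hx]]. destruct (pick_pre P f u) eqn:E; simpl in Hx; [|tauto].
      destruct Hx as [<-|[]]. apply pick_pre_spec in E. tauto.
    + intro Hx. exists (f x). split. apply HiQ; auto.
      destruct (pick_pre_some P f x Hx) as [y Hy]. rewrite Hy. simpl.
      apply pick_pre_spec in Hy. left. apply Hinj; tauto.
Qed.

Lemma fcard_le2 {T U : Type} (P : T -> Prop) (Q : U -> Prop) (f : T -> U) (g : U -> nat) (N : nat) :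
  (forall x, Q x -> (g x < N)%nat) -> (forall x y, Q x -> Q y -> g x = g y -> x = y) ->
  (forall x, P x -> Q (f x)) ->
  (forall x y, P x -> P y -> f x = f y -> x = y) -> (fcard P <= fcard Q)%nat.
Proof.
  intros Hg1 Hg2 H1 H2.
  destruct (finite_inj Q (fun m => (m < N)%nat) g (seq 0 N)) as [lQ [HnQ HiQ]]; auto.
  apply seq_NoDup. intro x. rewrite in_seq. lia.
  apply (fcard_le P Q f lQ); auto.
Qed.


Lemma frac_addZ (r : R) (z : Z) : frac_part (r + IZR z) = frac_part r.
Proof.
  destruct (Int_part_frac_part_spec (r + IZR z) (Int_part r + z) (frac_part r)) as [_ H].
  - destruct (base_fp r); lra.
  - rewrite plus_IZR. pose proof (Rplus_Int_part_frac_part r). lra.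
  - auto.
Qed.

Lemma frac_id (t : R) : 0 <= t < 1 -> frac_part t = t.
Proof.
  intro H. destruct (Int_part_frac_part_spec t 0 t H) as [_ E]. simpl; lra. auto.
Qed.

Lemma frac_frac_plus (x y : R) : frac_part (frac_part x + y) = frac_part (x + y).
Proof.
  replace (frac_part x + y) with ((x + y) + IZR (- Int_part x)) by (rewrite opp_IZR; unfold frac_part; ring).
  apply frac_addZ.
Qed.

Lemma IZR_small (z : Z) : -1 < IZR z < 1 -> z = 0%Z.
Proof.
  intros [H1 H2]. apply lt_IZR in H1. apply lt_IZR in H2. lia.
Qed.

Lemma frac_inj (s s' c : R) : 0 <= s < 1 -> 0 <= s' < 1 ->
  frac_part (s + c) = frac_part (s' + c) -> s = s'.
Proof.
  intros H1 H2 E. unfold frac_part in E.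
  assert (Hz : IZR (Int_part (s + c) - Int_part (s' + c)) = s - s') by (rewrite minus_IZR; lra).
  assert (Int_part (s + c) - Int_part (s' + c) = 0)%Z by (apply IZR_small; lra).
  rewrite H in Hz. simpl in Hz. lra.
Qed.

Lemma frac_range (x : R) : 0 <= frac_part x < 1.
Proof. destruct (base_fp x); lra. Qed.

Lemma frac_sub_add (t c : R) : 0 <= t < 1 -> frac_part (frac_part (t - c) + c) = t.
Proof.
  intro H. rewrite frac_frac_plus. replace (t - c + c) with t by ring. apply frac_id; auto.
Qed.

Lemma ln_0 : ln 0 = 0.
Proof. unfold ln. destruct (Rlt_dec 0 0) as [h|h]. exfalso; lra. reflexivity. Qed.

Lemma ln_INR_mono (a b : nat) : (a <= b)%nat -> 0 <= ln (INR a) <= ln (INR b).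
Proof.
  intro H.
  assert (Hp : forall c : nat, (1 <= c)%nat -> 0 <= ln (INR c)).
  { intros c Hc. assert (1 <= INR c) by (apply (le_INR 1); lia).
    rewrite <- ln_1. destruct (Req_dec (INR c) 1) as [->|Hne]. lra. left; apply ln_increasing; lra. }
  destruct a as [|a].
  - simpl. rewrite ln_0. split; [lra|]. destruct b as [|b]. simpl; rewrite ln_0; lra. apply Hp; lia.
  - assert (INR (S a) <= INR b) by (apply le_INR; lia). split. apply Hp; lia.
    assert (1 <= INR (S a)) by (apply (le_INR 1); lia).
    destruct (Req_dec (INR (S a)) (INR b)) as [->|Hne]. lra. left; apply ln_increasing; lra.
Qed.

Lemma squeeze0 (u w : nat -> R) : (forall n, (1 <= n)%nat -> 0 <= u n <= w n) -> Un_cv w 0 -> Un_cv u 0.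
Proof.
  intros H Hw eps Heps. destruct (Hw eps Heps) as [N HN]. exists (S N). intros n Hn.
  specialize (H n ltac:(lia)). specialize (HN n ltac:(lia)). unfold Rdist in *.
  rewrite Rminus_0_r in *. rewrite Rabs_right in * by lra. lra.
Qed.

Lemma cont_ln1 : continuity_pt ln 1.
Proof. apply derivable_continuous_pt. exists (/1). apply derivable_pt_lim_ln. lra. Qed.

Lemma cont_exp (x : R) : continuity_pt exp x.
Proof. apply derivable_continuous_pt. exists (exp x). apply derivable_pt_lim_exp. Qed.


Lemma E_mono (E dE : R -> R) lam (hdE : forall x, derivable_pt_lim E x (dE x))
  (hlo : forall x, lam <= dE x) x y : x <= y -> E y - E x >= lam * (y - x).
Proof.
  intro H. destruct (Req_dec x y) as [->|Hne]. lra.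
  destruct (MVT_cor2 E dE x y ltac:(lra) (fun c _ => hdE c)) as [c [Hc _]].
  rewrite Hc. apply Rle_ge. apply Rmult_le_compat_r; [lra| apply hlo].
Qed.

Lemma E_cont (E dE : R -> R) (hdE : forall x, derivable_pt_lim E x (dE x)) : continuity E.
Proof. intro x. apply derivable_continuous_pt. exists (dE x). apply hdE. Qed.

Lemma Ij_Int (E : R -> R) j q : Ij E j q -> Int_part (E q) = Z.of_nat j.
Proof.
  unfold Ij. intro H. symmetry. apply Int_part_spec. rewrite <- INR_IZR_INZ. lra.
Qed.

Lemma Ij_Ec (E : R -> R) j q : Ij E j q -> Ec E q = E q - INR j.
Proof.
  intro H. unfold Ec, frac_part. rewrite (Ij_Int E j q H). rewrite <- INR_IZR_INZ. reflexivity.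
Qed.

Lemma Ij_unique (E : R -> R) j j' q : Ij E j q -> Ij E j' q -> j = j'.
Proof.
  intros H1 H2. pose proof (Ij_Int E j q H1). pose proof (Ij_Int E j' q H2).
  rewrite H in H0. lia.
Qed.

Lemma Ec_range (E : R -> R) x : in_S1 (Ec E x).
Proof. unfold in_S1, Ec. apply frac_range. Qed.

Lemma iter_range (E : R -> R) i p : in_S1 p -> in_S1 (Nat.iter i (Ec E) p).
Proof. intro H. destruct i; simpl; auto. apply Ec_range. Qed.


Lemma E_range (E dE : R -> R) lam ell (hdE : forall x, derivable_pt_lim E x (dE x))
  (hlo : forall x, lam <= dE x) (hlam : 1 < lam)
  (hEdeg : forall x, E (x + 1) = E x + INR ell) (hE0 : E 0 = 0) q :
  in_S1 q -> 0 <= E q < INR ell.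
Proof.
  intros [H1 H2]. pose proof (E_mono E dE lam hdE hlo 0 q H1).
  pose proof (E_mono E dE lam hdE hlo q 1 ltac:(lra)).
  pose proof (hEdeg 0). rewrite Rplus_0_l, hE0 in H3. rewrite H3 in H0.
  split; nra.
Qed.

Lemma branch (E dE : R -> R) lam ell (hdE : forall x, derivable_pt_lim E x (dE x))
  (hlo : forall x, lam <= dE x) (hlam : 1 < lam)
  (hEdeg : forall x, E (x + 1) = E x + INR ell) (hE0 : E 0 = 0) (j : nat) t :
  (j < ell)%nat -> 0 <= t < 1 -> exists q, in_S1 q /\ E q = INR j + t.
Proof.
  intros Hj Ht.
  assert (Hl : INR j + 1 <= INR ell) by (rewrite <- S_INR; apply le_INR; lia).
  assert (HE1 : E 1 = INR ell) by (pose proof (hEdeg 0); rewrite Rplus_0_l, hE0 in H; lra).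
  pose proof (pos_INR j).
  destruct (IVT_cor (fun q => E q - (INR j + t)) 0 1) as [q [Hq Hq0]].
  - intro x. apply continuity_pt_minus. apply (E_cont E dE hdE). apply continuity_pt_const. intros a b; auto.
  - lra.
  - rewrite hE0, HE1. assert (0 <= (INR ell - (INR j + t))) by lra.
    assert (0 <= INR j + t) by lra. nra.
  - exists q. assert (q <> 1). { intro; subst. rewrite HE1 in Hq0. lra. }
    split. split; lra. lra.
Qed.

Definition digit (E : R -> R) (q : R) : nat := Z.to_nat (Int_part (E q)).

Lemma digit_spec (E dE : R -> R) lam ell (hdE : forall x, derivable_pt_lim E x (dE x))
  (hlo : forall x, lam <= dE x) (hlam : 1 < lam)
  (hEdeg : forall x, E (x + 1) = E x + INR ell) (hE0 : E 0 = 0) q :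
  in_S1 q -> Ij E (digit E q) q /\ (digit E q < ell)%nat.
Proof.
  intro Hq. pose proof (E_range E dE lam ell hdE hlo hlam hEdeg hE0 q Hq).
  destruct (base_Int_part (E q)) as [B1 B2].
  assert (0 <= Int_part (E q))%Z.
  { assert (-1 < IZR (Int_part (E q))) by lra. apply lt_IZR in H0. lia. }
  assert (HI : INR (digit E q) = IZR (Int_part (E q))).
  { unfold digit. rewrite INR_IZR_INZ. rewrite Z2Nat.id; auto. }
  split. unfold Ij. rewrite HI. lra.
  apply INR_lt. rewrite HI. lra.
Qed.

Lemma Ij_inj (E dE : R -> R) lam (hdE : forall x, derivable_pt_lim E x (dE x))
  (hlo : forall x, lam <= dE x) (hlam : 1 < lam) j q q' :
  Ij E j q -> Ij E j q' -> Ec E q = Ec E q' -> q = q'.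
Proof.
  intros H1 H2 He. rewrite (Ij_Ec E j q H1), (Ij_Ec E j q' H2) in He.
  destruct (Rle_dec q q') as [h|h].
  - pose proof (E_mono E dE lam hdE hlo q q' h). nra.
  - pose proof (E_mono E dE lam hdE hlo q' q ltac:(lra)). nra.
Qed.

Definition good (ell : nat) (a : nat -> nat) := forall k, (1 <= k)%nat -> (a k < ell)%nat.

Lemma inI_succ_fwd (E : R -> R) a k p :
  inI E a (S k) p -> Ij E (a (S k)) p /\ inI E a k (Ec E p).
Proof.
  intros [Hp H]. split.
  - specialize (H 0%nat ltac:(lia)). rewrite Nat.sub_0_r in H. exact H.
  - split. apply Ec_range. intros i Hi. specialize (H (S i) ltac:(lia)).
    rewrite Nat.iter_succ_r in H. replace (S k - S i)%nat with (k - i)%nat in H by lia. exact H.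
Qed.

Lemma inI_succ_bwd (E : R -> R) a k p :
  in_S1 p -> Ij E (a (S k)) p -> inI E a k (Ec E p) -> inI E a (S k) p.
Proof.
  intros Hp Hj [_ H]. split; auto. intros i Hi. destruct i as [|i].
  - rewrite Nat.sub_0_r. exact Hj.
  - rewrite Nat.iter_succ_r. replace (S k - S i)%nat with (k - i)%nat by lia. apply H. lia.
Qed.

Lemma coding_exists (E dE : R -> R) lam ell (hdE : forall x, derivable_pt_lim E x (dE x))
  (hlo : forall x, lam <= dE x) (hlam : 1 < lam)
  (hEdeg : forall x, E (x + 1) = E x + INR ell) (hE0 : E 0 = 0) a (ha : good ell a) y :
  in_S1 y -> forall k, exists p, inI E a k p /\ Nat.iter k (Ec E) p = y.
Proof.
  intros Hy k. induction k as [|k [p' [Hp' Hit]]].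
  - exists y. split. split; auto. intros; lia. reflexivity.
  - destruct Hp' as [Hp'1 Hp'2].
    destruct (branch E dE lam ell hdE hlo hlam hEdeg hE0 (a (S k)) p' (ha (S k) ltac:(lia)) Hp'1) as [q [Hq HEq]].
    assert (HIj : Ij E (a (S k)) q) by (unfold Ij; destruct Hp'1; lra).
    assert (HEc : Ec E q = p') by (rewrite (Ij_Ec E _ q HIj); lra).
    exists q. split.
    + apply inI_succ_bwd; auto. rewrite HEc. split; auto.
    + rewrite Nat.iter_succ_r, HEc. auto.
Qed.

Lemma coding_unique (E dE : R -> R) lam (hdE : forall x, derivable_pt_lim E x (dE x))
  (hlo : forall x, lam <= dE x) (hlam : 1 < lam) a k :
  forall p p', inI E a k p -> inI E a k p' -> Nat.iter k (Ec E) p = Nat.iter k (Ec E) p' -> p = p'.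
Proof.
  induction k as [|k IH]; intros p p' H1 H2 He. exact He.
  apply inI_succ_fwd in H1 as [J1 I1]. apply inI_succ_fwd in H2 as [J2 I2].
  rewrite !Nat.iter_succ_r in He.
  apply (Ij_inj E dE lam hdE hlo hlam (a (S k))); auto.
Qed.

Lemma xw_spec (E dE : R -> R) lam ell (hdE : forall x, derivable_pt_lim E x (dE x))
  (hlo : forall x, lam <= dE x) (hlam : 1 < lam)
  (hEdeg : forall x, E (x + 1) = E x + INR ell) (hE0 : E 0 = 0) a (ha : good ell a) y k :
  in_S1 y -> inI E a k (xw E y a k) /\ Nat.iter k (Ec E) (xw E y a k) = y.
Proof.
  intro Hy. unfold xw. apply epsilon_spec.
  apply (coding_exists E dE lam ell hdE hlo hlam hEdeg hE0 a ha y Hy).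
Qed.

Lemma xw_char (E dE : R -> R) lam ell (hdE : forall x, derivable_pt_lim E x (dE x))
  (hlo : forall x, lam <= dE x) (hlam : 1 < lam)
  (hEdeg : forall x, E (x + 1) = E x + INR ell) (hE0 : E 0 = 0) a (ha : good ell a) y k p :
  in_S1 y -> inI E a k p -> Nat.iter k (Ec E) p = y -> xw E y a k = p.
Proof.
  intros Hy H1 H2. destruct (xw_spec E dE lam ell hdE hlo hlam hEdeg hE0 a ha y k Hy) as [X1 X2].
  apply (coding_unique E dE lam hdE hlo hlam a k); auto. congruence.
Qed.

Lemma inI_shift (E : R -> R) a k m p : (m <= k)%nat -> inI E a k p ->
  inI E a m (Nat.iter (k - m) (Ec E) p).
Proof.
  intros Hm [Hp H]. split. apply iter_range; auto.
  intros i Hi. rewrite <- Nat.iter_add. specialize (H (i + (k - m))%nat ltac:(lia)).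
  replace (k - (i + (k - m)))%nat with (m - i)%nat in H by lia. exact H.
Qed.

Lemma xw_iter (E dE : R -> R) lam ell (hdE : forall x, derivable_pt_lim E x (dE x))
  (hlo : forall x, lam <= dE x) (hlam : 1 < lam)
  (hEdeg : forall x, E (x + 1) = E x + INR ell) (hE0 : E 0 = 0) a (ha : good ell a) y k m :
  in_S1 y -> (m <= k)%nat -> Nat.iter (k - m) (Ec E) (xw E y a k) = xw E y a m.
Proof.
  intros Hy Hm. destruct (xw_spec E dE lam ell hdE hlo hlam hEdeg hE0 a ha y k Hy) as [X1 X2].
  symmetry. apply (xw_char E dE lam ell hdE hlo hlam hEdeg hE0 a ha y m); auto.
  apply inI_shift; auto. rewrite <- Nat.iter_add. replace (m + (k - m))%nat with k by lia. auto.
Qed.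


Lemma dEn_mul (E dE : R -> R) i j p :
  dEn E dE (i + j) p = dEn E dE i p * dEn E dE j (Nat.iter i (Ec E) p).
Proof.
  revert p. induction i as [|i IH]; intro p; simpl. ring.
  rewrite IH. rewrite <- Nat.iter_succ_r. simpl. ring.
Qed.

Lemma dEn_lower (E dE : R -> R) lam (hlam : 1 < lam) (hlo : forall x, lam <= dE x) k p :
  lam ^ k <= dEn E dE k p.
Proof.
  revert p. induction k as [|k IH]; intro p; simpl. lra.
  pose proof (IH (Ec E p)). pose proof (hlo p). pose proof (pow_lt lam k ltac:(lra)).
  apply Rmult_le_compat; lra.
Qed.

Lemma dEn_pos (E dE : R -> R) lam (hlam : 1 < lam) (hlo : forall x, lam <= dE x) k p :
  0 < dEn E dE k p.
Proof. pose proof (dEn_lower E dE lam hlam hlo k p). pose proof (pow_lt lam k ltac:(lra)). lra. Qed.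

Fixpoint Bn (E dE dtau : R -> R) (k : nat) (p : R) : R :=
  match k with O => 0 | S m => dtau p + dE p * Bn E dE dtau m (Ec E p) end.

Fixpoint Cn (E tau : R -> R) (k : nat) (p : R) : R :=
  match k with O => 0 | S m => tau p + Cn E tau m (Ec E p) end.

Lemma iter_fskew (E tau : R -> R) n : forall p s, 0 <= s < 1 ->
  Nat.iter n (f_skew E tau) (p, s) = (Nat.iter n (Ec E) p, frac_part (s + Cn E tau n p)).
Proof.
  induction n as [|n IH]; intros p s Hs.
  - simpl. rewrite Rplus_0_r, frac_id; auto.
  - rewrite Nat.iter_succ_r. unfold f_skew at 2. simpl fst. simpl snd.
    rewrite IH by apply frac_range. rewrite Nat.iter_succ_r. f_equal.
    rewrite frac_frac_plus. simpl. unfold Ec. rewrite Rplus_assoc. reflexivity.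
Qed.

Lemma Dfn_formula (E tau dE dtau : R -> R) n : forall p s xi eta,
  Dfn E tau dE dtau n (p, s) (xi, eta) = (dEn E dE n p * xi, eta + xi * Bn E dE dtau n p).
Proof.
  induction n as [|n IH]; intros p s xi eta; simpl.
  - f_equal; ring.
  - unfold f_skew, Df. simpl. rewrite IH. f_equal. unfold Ec. ring. unfold Ec. ring.
Qed.

Fixpoint Psum (E dE dtau : R -> R) (y : R) (a : nat -> nat) (m : nat) : R :=
  match m with O => 0 | S k => Psum E dE dtau y a k + Sterm E dE dtau y a (S k) end.

Lemma Psum_sum (E dE dtau : R -> R) y a N :
  Psum E dE dtau y a (S N) = sum_f_R0 (fun k => Sterm E dE dtau y a (S k)) N.
Proof.
  induction N as [|N IH]. simpl. ring. simpl Psum. simpl sum_f_R0. rewrite <- IH. simpl. ring.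
Qed.

Lemma Bn_Psum (E dE dtau : R -> R) lam ell (hdE : forall x, derivable_pt_lim E x (dE x))
  (hlo : forall x, lam <= dE x) (hlam : 1 < lam)
  (hEdeg : forall x, E (x + 1) = E x + INR ell) (hE0 : E 0 = 0) a (ha : good ell a) y :
  in_S1 y -> forall m, Bn E dE dtau m (xw E y a m) = dEn E dE m (xw E y a m) * Psum E dE dtau y a m.
Proof.
  intros Hy m. induction m as [|m IH]. simpl; ring.
  pose proof (xw_iter E dE lam ell hdE hlo hlam hEdeg hE0 a ha y (S m) m Hy ltac:(lia)) as Hit.
  replace (S m - m)%nat with 1%nat in Hit by lia. simpl in Hit.
  simpl Bn. simpl dEn. rewrite Hit, IH. simpl Psum. unfold Sterm. simpl dEn. rewrite Hit.
  pose proof (dEn_pos E dE lam hlam hlo m (xw E y a m)).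
  pose proof (hlo (xw E y a (S m))).
  field. split; lra.
Qed.


Lemma partial_tail (u : nat -> R) (N : nat) c lam : 1 < lam -> 0 <= c ->
  (forall j, (1 <= j)%nat -> Rabs (u (N + j)%nat) <= c * (/ lam) ^ j) ->
  forall m, Rabs (sum_f_R0 u (N + m) - sum_f_R0 u N) <= c * (1 - (/ lam) ^ m) / (lam - 1).
Proof.
  intros hl hc H m. induction m as [|m IH].
  - rewrite Nat.add_0_r. unfold Rminus at 1. rewrite Rplus_opp_r, Rabs_R0. simpl.
    replace (c * (1 - 1) / (lam - 1)) with 0 by (field; lra). lra.
  - replace (N + S m)%nat with (S (N + m)) by lia. simpl sum_f_R0.
    replace (S (N + m)) with (N + S m)%nat by lia.
    specialize (H (S m) ltac:(lia)).
    replace (sum_f_R0 u (N + m) + u (N + S m)%nat - sum_f_R0 u N)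
      with ((sum_f_R0 u (N + m) - sum_f_R0 u N) + u (N + S m)%nat) by ring.
    eapply Rle_trans. apply Rabs_triang.
    assert (Hq : (/ lam) ^ S m = (/ lam) ^ m * / lam) by (simpl; ring).
    assert (E : c * (1 - (/ lam) ^ m) / (lam - 1) + c * (/ lam) ^ S m = c * (1 - (/ lam) ^ S m) / (lam - 1)).
    { rewrite Hq. field. lra. }
    lra.
Qed.

Lemma tail_lim (u : nat -> R) l N T : infinite_sum u l ->
  (forall m, Rabs (sum_f_R0 u (N + m) - sum_f_R0 u N) <= T) -> Rabs (l - sum_f_R0 u N) <= T.
Proof.
  intros Hl H. destruct (Rle_dec (Rabs (l - sum_f_R0 u N)) T) as [h|h]; auto. exfalso.
  destruct (Hl (Rabs (l - sum_f_R0 u N) - T) ltac:(lra)) as [n0 Hn0].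
  specialize (Hn0 (N + n0)%nat ltac:(lia)). specialize (H n0). unfold Rdist in Hn0.
  assert (Rabs (l - sum_f_R0 u N) <= Rabs (sum_f_R0 u (N + n0) - l) + Rabs (sum_f_R0 u (N + n0) - sum_f_R0 u N)).
  { replace (l - sum_f_R0 u N) with (- (sum_f_R0 u (N + n0) - l) + (sum_f_R0 u (N + n0) - sum_f_R0 u N)) by ring.
    eapply Rle_trans. apply Rabs_triang. rewrite Rabs_Ropp. lra. }
  lra.
Qed.

Lemma series_exists (u : nat -> R) M lam : 1 < lam -> 0 <= M ->
  (forall k, Rabs (u k) <= M * (/ lam) ^ (S k)) -> exists l, infinite_sum u l.
Proof.
  intros hl hM H.
  assert (Hq : 0 < / lam < 1). { split. apply Rinv_0_lt_compat; lra. rewrite <- Rinv_1. apply Rinv_lt_contravar; lra. }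
  assert (HB : forall N m, Rabs (sum_f_R0 u (N + m) - sum_f_R0 u N) <= M * (/ lam) ^ N / (lam - 1)).
  { intros N m. eapply Rle_trans. apply (partial_tail u N (M * (/ lam) ^ N) lam); auto.
    - apply Rmult_le_pos; auto. apply pow_le; lra.
    - intros j Hj. eapply Rle_trans. apply H. replace (S (N + j)) with (N + j + 1)%nat by lia.
      rewrite !pow_add. simpl pow.
      assert (0 < (/lam) ^ N) by (apply pow_lt; lra). assert (0 < (/lam) ^ j) by (apply pow_lt; lra).
      assert (0 <= M * (/lam) ^ N * (/lam) ^ j) by (apply Rmult_le_pos; [apply Rmult_le_pos|]; lra).
      replace (M * ((/ lam) ^ N * (/ lam) ^ j * (/ lam * 1))) with ((M * (/ lam) ^ N * (/ lam) ^ j) * / lam) by ring.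
      nra.
    - assert (0 <= (/lam) ^ m) by (apply pow_le; lra). assert (0 <= M * (/ lam) ^ N) by (apply Rmult_le_pos; auto; apply pow_le; lra).
      unfold Rdiv. apply Rmult_le_compat_r. left; apply Rinv_0_lt_compat; lra. nra. }
  assert (Hc : Cauchy_crit (sum_f_R0 u)).
  { intros eps Heps.
    destruct (pow_lt_1_zero (/ lam) ltac:(rewrite Rabs_right; lra) (eps * (lam - 1) / (2 * (M + 1)))) as [N HN].
    { apply Rmult_lt_0_compat. apply Rmult_lt_0_compat; lra. apply Rinv_0_lt_compat; lra. }
    exists N. intros n m Hn Hm. specialize (HN N (le_n N)). rewrite Rabs_right in HN by (apply Rle_ge, pow_le; lra).
    assert (Hb : M * (/ lam) ^ N / (lam - 1) < eps / 2).
    { assert (0 <= (/lam)^N) by (apply pow_le; lra).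
      apply (Rmult_lt_reg_r (lam - 1)). lra. unfold Rdiv. rewrite Rmult_assoc, Rinv_l by lra.
      rewrite Rmult_1_r. 
      assert ((/ lam) ^ N * (2 * (M + 1)) < eps * (lam - 1)).
      { apply (Rmult_lt_reg_r (/ (2 * (M + 1)))). apply Rinv_0_lt_compat; lra.
        rewrite Rmult_assoc, Rinv_r, Rmult_1_r by lra. exact HN. }
      nra. }
    pose proof (HB N (n - N)%nat). pose proof (HB N (m - N)%nat).
    replace (N + (n - N))%nat with n in H0 by lia. replace (N + (m - N))%nat with m in H1 by lia.
    unfold Rdist. replace (sum_f_R0 u n - sum_f_R0 u m) with ((sum_f_R0 u n - sum_f_R0 u N) - (sum_f_R0 u m - sum_f_R0 u N)) by ring.
    eapply Rle_lt_trans. apply Rabs_triang. rewrite Rabs_Ropp. lra. }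
  destruct (R_complete _ Hc) as [l Hl]. exists l. intros eps Heps. destruct (Hl eps Heps) as [N HN].
  exists N. intros n Hn. apply HN. auto.
Qed.


Lemma Sterm_bound (E dE dtau : R -> R) lam M (hlam : 1 < lam) (hlo : forall x, lam <= dE x)
  (hM : forall x, Rabs (dtau x) <= M) y a k :
  Rabs (Sterm E dE dtau y a k) <= M / dEn E dE k (xw E y a k).
Proof.
  unfold Sterm. pose proof (dEn_pos E dE lam hlam hlo k (xw E y a k)).
  unfold Rdiv. rewrite Rabs_mult, Rabs_inv, (Rabs_right (dEn _ _ _ _)) by lra.
  apply Rmult_le_compat_r. left; apply Rinv_0_lt_compat; lra. apply hM.
Qed.

Lemma Ssum_spec (E dE dtau : R -> R) lam M (hdE : forall x, derivable_pt_lim E x (dE x))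
  (hlo : forall x, lam <= dE x) (hlam : 1 < lam)
  (hM : forall x, Rabs (dtau x) <= M) (hM0 : 0 <= M) y a :
  infinite_sum (fun k => Sterm E dE dtau y a (S k)) (Ssum E dE dtau y a).
Proof.
  unfold Ssum. apply epsilon_spec. apply (series_exists _ M lam hlam hM0).
  intro k. eapply Rle_trans. apply (Sterm_bound E dE dtau lam M hlam hlo hM).
  pose proof (dEn_lower E dE lam hlam hlo (S k) (xw E y a (S k))).
  pose proof (pow_lt lam (S k) ltac:(lra)).
  rewrite pow_inv. unfold Rdiv. apply Rmult_le_compat_l; auto.
  apply Rinv_le_contravar; lra.
Qed.

Lemma Ssum_tail (E dE dtau : R -> R) lam ell M (hdE : forall x, derivable_pt_lim E x (dE x))
  (hlo : forall x, lam <= dE x) (hlam : 1 < lam)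
  (hEdeg : forall x, E (x + 1) = E x + INR ell) (hE0 : E 0 = 0)
  (hM : forall x, Rabs (dtau x) <= M) (hM0 : 0 <= M) a (ha : good ell a) y n :
  in_S1 y -> (1 <= n)%nat ->
  Rabs (Ssum E dE dtau y a - Psum E dE dtau y a n) <= M / (lam - 1) / dEn E dE n (xw E y a n).
Proof.
  intros Hy Hn. set (D := dEn E dE n (xw E y a n)).
  assert (HD : 0 < D) by apply (dEn_pos E dE lam hlam hlo).
  destruct n as [|N]. lia. rewrite Psum_sum.
  apply (tail_lim _ _ N). apply (Ssum_spec E dE dtau lam M); auto.
  intro m. eapply Rle_trans. apply (partial_tail _ N (M / D) lam hlam).
  - apply Rmult_le_pos; auto. left; apply Rinv_0_lt_compat; auto.
  - intros j Hj. eapply Rle_trans. apply (Sterm_bound E dE dtau lam M hlam hlo hM).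
    replace (S (N + j)) with (j + S N)%nat by lia.
    rewrite dEn_mul.
    pose proof (xw_iter E dE lam ell hdE hlo hlam hEdeg hE0 a ha y (j + S N) (S N) Hy ltac:(lia)) as Hit.
    replace (j + S N - S N)%nat with j in Hit by lia. rewrite Hit. fold D.
    pose proof (dEn_lower E dE lam hlam hlo j (xw E y a (j + S N))).
    pose proof (pow_lt lam j ltac:(lra)).
    rewrite pow_inv. unfold Rdiv. rewrite Rinv_mult. 
    replace (M * (/ dEn E dE j (xw E y a (j + S N)) * / D)) with ((M * / D) * / dEn E dE j (xw E y a (j + S N))) by ring.
    apply Rmult_le_compat_l. apply Rmult_le_pos; auto. left; apply Rinv_0_lt_compat; auto.
    apply Rinv_le_contravar; lra.
  - assert (0 <= (/lam)^m) by (apply pow_le; left; apply Rinv_0_lt_compat; lra).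
    assert (0 <= M / D) by (apply Rmult_le_pos; auto; left; apply Rinv_0_lt_compat; auto).
    unfold Rdiv. replace (M * / (lam - 1) * / D) with ((M * / D) * 1 * / (lam - 1)) by ring.
    apply Rmult_le_compat_r. left; apply Rinv_0_lt_compat; lra.
    unfold Rdiv in H0. nra.
Qed.


Lemma dtau_cont r tau dtau : (2 <= r)%nat -> Cr r tau ->
  (forall x, derivable_pt_lim tau x (dtau x)) -> forall x, continuity_pt dtau x.
Proof.
  intros Hr HC Hd x. destruct r as [|[|k]]; try lia.
  destruct HC as [f' [Hf' [f'' [Hf'' _]]]].
  assert (Heq : forall z, f' z = dtau z) by (intro z; apply (uniqueness_limite tau z); auto).
  apply (continuity_pt_locally_ext f' dtau 1 x).
  - lra.
  - intros; auto.
  - apply derivable_continuous_pt. exists (f'' x). exact (Hf'' x).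
Qed.

Lemma dtau_per tau dtau : (forall x, derivable_pt_lim tau x (dtau x)) ->
  (forall x, tau (x + 1) = tau x) -> forall x, dtau (x + 1) = dtau x.
Proof.
  intros Hd Hp x. apply (uniqueness_limite tau x); auto.
  intros eps Heps. destruct (Hd (x + 1) eps Heps) as [del Hdel]. exists del.
  intros h Hh Hhd. specialize (Hdel h Hh Hhd).
  replace (x + 1 + h) with ((x + h) + 1) in Hdel by ring. rewrite !Hp in Hdel. exact Hdel.
Qed.

Lemma dtau_frac tau dtau : (forall x, derivable_pt_lim tau x (dtau x)) ->
  (forall x, tau (x + 1) = tau x) -> forall x, dtau x = dtau (frac_part x).
Proof.
  intros Hd Hp. pose proof (dtau_per tau dtau Hd Hp) as P.
  assert (P1 : forall n x, dtau (x + INR n) = dtau x).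
  { induction n as [|n IH]; intro x. simpl. rewrite Rplus_0_r; auto.
    rewrite S_INR. replace (x + (INR n + 1)) with ((x + INR n) + 1) by ring. rewrite P. auto. }
  assert (P2 : forall n x, dtau (x - INR n) = dtau x).
  { intros n x. rewrite <- (P1 n (x - INR n)). f_equal. ring. }
  intro x. unfold frac_part. destruct (Z_le_gt_dec 0 (Int_part x)) as [h|h].
  - replace (IZR (Int_part x)) with (INR (Z.to_nat (Int_part x))).
    rewrite P2. auto. rewrite INR_IZR_INZ. rewrite Z2Nat.id; auto.
  - replace (IZR (Int_part x)) with (- INR (Z.to_nat (- Int_part x))).
    unfold Rminus. rewrite Ropp_involutive. rewrite P1. auto.
    rewrite INR_IZR_INZ. rewrite Z2Nat.id by lia. rewrite opp_IZR. ring.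
Qed.

Lemma supnorm_bound r tau dtau : (2 <= r)%nat -> Cr r tau ->
  (forall x, derivable_pt_lim tau x (dtau x)) -> (forall x, tau (x + 1) = tau x) ->
  (forall x, Rabs (dtau x) <= supnorm dtau) /\ 0 <= supnorm dtau.
Proof.
  intros Hr HC Hd Hp.
  destruct (continuity_ab_maj (fun x => Rabs (dtau x)) 0 1 ltac:(lra)) as [Mx [HMx _]].
  { intros c _. apply (continuity_pt_comp dtau Rabs). apply (dtau_cont r tau); auto. apply Rcontinuity_abs. }
  assert (Hb : forall x, Rabs (dtau x) <= Rabs (dtau Mx)).
  { intro x. rewrite (dtau_frac tau dtau Hd Hp x). apply HMx. pose proof (frac_range x). lra. }
  assert (Hl : is_lub (fun y => exists x, y = Rabs (dtau x)) (supnorm dtau)).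
  { unfold supnorm. apply epsilon_spec.
    destruct (completeness (fun y => exists x, y = Rabs (dtau x))) as [m Hm].
    - exists (Rabs (dtau Mx)). intros y [x ->]. apply Hb.
    - exists (Rabs (dtau 0)). eauto.
    - eauto. }
  assert (H1 : forall x, Rabs (dtau x) <= supnorm dtau).
  { intro x. apply (proj1 Hl). eauto. }
  split; auto. eapply Rle_trans. apply Rabs_pos. apply (H1 0).
Qed.


Fixpoint code (ell : nat) (w : list nat) : nat :=
  match w with nil => 0%nat | j :: w' => (j + ell * code ell w')%nat end.

Lemma code_lt ell n w : word ell n w -> (code ell w < ell ^ n)%nat.
Proof.
  revert n. induction w as [|j w IH]; intros n [Hl Hf]; simpl in *.
  - subst. simpl. lia.
  - destruct n as [|n]; [discriminate|]. inversion Hf; subst.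
    assert (code ell w < ell ^ n)%nat by (apply IH; split; auto).
    simpl. nia.
Qed.

Lemma code_inj ell n w1 w2 : word ell n w1 -> word ell n w2 -> code ell w1 = code ell w2 -> w1 = w2.
Proof.
  revert n w2. induction w1 as [|j w IH]; intros n w2 [Hl Hf] [Hl2 Hf2] He.
  - subst. destruct w2; [auto|discriminate].
  - destruct w2 as [|j2 w2]; [simpl in *; lia|]. simpl in *. inversion Hf; inversion Hf2; subst.
    assert (code ell w = code ell w2 /\ j = j2) as [E1 E2].
    { destruct (Nat.lt_total (code ell w) (code ell w2)) as [h|[h|h]]; nia. }
    subst. f_equal. apply (IH (length w)). split; auto. split; auto. auto.
Qed.

Lemma words_bound ell n (X : list nat -> Prop) :
  (fcard (fun w => word ell n w /\ X w) <= ell ^ n)%nat.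
Proof.
  apply (fcard_le_N _ (code ell)).
  - intros w [Hw _]. apply code_lt; auto.
  - intros w1 w2 [H1 _] [H2 _]. apply code_inj with n; auto.
Qed.

Lemma ext_good ell ext n w : ext_ok ell ext -> word ell n w -> good ell (ext w).
Proof. intros He [_ Hf] k Hk. apply (proj2 (He w Hf)); auto. Qed.

Lemma word_eq_ext ell ext n w1 w2 : ext_ok ell ext -> word ell n w1 -> word ell n w2 ->
  (forall k, (1 <= k <= n)%nat -> ext w1 k = ext w2 k) -> w1 = w2.
Proof.
  intros He [L1 F1] [L2 F2] H. apply (nth_ext w1 w2 0%nat 0%nat). congruence.
  intros i Hi. specialize (H (S i) ltac:(lia)).
  rewrite (proj1 (He w1 F1) (S i) ltac:(lia)), (proj1 (He w2 F2) (S i) ltac:(lia)) in H.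
  replace (S i - 1)%nat with i in H by lia. auto.
Qed.

Definition word_of (E : R -> R) (n : nat) (p : R) : list nat :=
  map (fun k => digit E (Nat.iter (n - k) (Ec E) p)) (seq 1 n).

Lemma word_of_nth E n p k : (1 <= k <= n)%nat ->
  nth (k - 1) (word_of E n p) 0%nat = digit E (Nat.iter (n - k) (Ec E) p).
Proof.
  intro Hk. unfold word_of.
  rewrite (nth_indep _ _ (digit E (Nat.iter (n - 0) (Ec E) p))) by (rewrite length_map, length_seq; lia).
  rewrite (map_nth (fun k => digit E (Nat.iter (n - k) (Ec E) p)) (seq 1 n) 0%nat).
  rewrite seq_nth by lia. f_equal. f_equal. f_equal. lia.
Qed.

Lemma word_of_word (E dE : R -> R) lam ell (hdE : forall x, derivable_pt_lim E x (dE x))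
  (hlo : forall x, lam <= dE x) (hlam : 1 < lam)
  (hEdeg : forall x, E (x + 1) = E x + INR ell) (hE0 : E 0 = 0) n p :
  in_S1 p -> word ell n (word_of E n p).
Proof.
  intro Hp. split. unfold word_of. rewrite length_map, length_seq. auto.
  apply Forall_forall. intros j Hj. unfold word_of in Hj. apply in_map_iff in Hj.
  destruct Hj as [k [<- _]]. apply (digit_spec E dE lam ell hdE hlo hlam hEdeg hE0). apply iter_range; auto.
Qed.

Lemma word_of_xw (E dE : R -> R) lam ell ext (hdE : forall x, derivable_pt_lim E x (dE x))
  (hlo : forall x, lam <= dE x) (hlam : 1 < lam)
  (hEdeg : forall x, E (x + 1) = E x + INR ell) (hE0 : E 0 = 0) (hext : ext_ok ell ext) n p y :
  in_S1 y -> in_S1 p -> Nat.iter n (Ec E) p = y -> xw E y (ext (word_of E n p)) n = p.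
Proof.
  intros Hy Hp Hit. pose proof (word_of_word E dE lam ell hdE hlo hlam hEdeg hE0 n p Hp) as Hw.
  apply (xw_char E dE lam ell hdE hlo hlam hEdeg hE0 _ (ext_good ell ext n _ hext Hw)); auto.
  split; auto. intros i Hi.
  rewrite (proj1 (hext _ (proj2 Hw)) (n - i)%nat) by (rewrite (proj1 Hw); lia). rewrite word_of_nth by lia.
  replace (n - (n - i))%nat with i by lia.
  apply (digit_spec E dE lam ell hdE hlo hlam hEdeg hE0). apply iter_range; auto.
Qed.


Lemma arith1 (eta P S D sq Rt thK thM : R) : 0 < D -> 0 < sq ->
  Rabs (eta - S) <= Rt / D -> Rabs (S - P) <= thM / D -> thK - thM >= Rt ->
  Rabs (eta / sq - (1 / sq / D) * (D * P)) <= thK * Rabs (1 / sq / D).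
Proof.
  intros HD Hsq H1 H2 H3.
  replace (eta / sq - (1 / sq / D) * (D * P)) with ((eta - P) * / sq) by (field; lra).
  replace (1 / sq / D) with (/ sq * / D) by (field; lra).
  assert (0 < / sq) by (apply Rinv_0_lt_compat; lra). assert (0 < / D) by (apply Rinv_0_lt_compat; lra).
  rewrite Rabs_mult, (Rabs_right (/ sq)) by lra. rewrite (Rabs_right (/ sq * / D)) by nra.
  assert (Rabs (eta - P) <= thK * / D).
  { replace (eta - P) with ((eta - S) + (S - P)) by ring. eapply Rle_trans. apply Rabs_triang.
    unfold Rdiv in *. nra. }
  nra.
Qed.

Lemma arith2 (v1 v2 xi etaw B D P S Rt thK thM : R) : 0 < D -> v1 <> 0 ->
  v1 = D * xi -> v2 = etaw + xi * B -> B = D * P -> Rabs etaw <= thK * Rabs xi ->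
  Rabs (S - P) <= thM / D -> Rt >= thK + thM ->
  Rabs (v2 / v1 - S) <= Rt / D.
Proof.
  intros HD Hv1 E1 E2 E3 Hc H2 H3. subst.
  assert (Hxi : xi <> 0) by (intro; subst; apply Hv1; ring).
  replace ((etaw + xi * (D * P)) / (D * xi) - S) with (etaw / (D * xi) + (P - S)) by (field; lra).
  eapply Rle_trans. apply Rabs_triang.
  assert (Rabs (etaw / (D * xi)) <= thK / D).
  { unfold Rdiv. rewrite Rabs_mult, Rabs_inv, Rabs_mult, (Rabs_right D) by lra.
    assert (0 < Rabs xi) by (apply Rabs_pos_lt; auto).
    apply (Rmult_le_reg_r (D * Rabs xi)). nra.
    rewrite Rmult_assoc, Rinv_l by nra. replace (thK * / D * (D * Rabs xi)) with (thK * Rabs xi) by (field; lra). lra. }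
  rewrite Rabs_minus_sym in H2. unfold Rdiv in *.
  assert (0 < / D) by (apply Rinv_0_lt_compat; lra). nra.
Qed.

Definition HypE (E dE : R -> R) lam ell : Prop :=
  (forall x, derivable_pt_lim E x (dE x)) /\ (forall x, lam <= dE x) /\ 1 < lam /\
  (forall x, E (x + 1) = E x + INR ell) /\ E 0 = 0.

Lemma preim_inj (E dE tau : R -> R) lam ell ext (hE : HypE E dE lam ell) (hext : ext_ok ell ext) n z
  (zeta1 zeta2 : R * R) : in_S1 (fst z) ->
  in_S1 (fst zeta1) -> in_S1 (snd zeta1) -> Nat.iter n (f_skew E tau) zeta1 = z ->
  in_S1 (fst zeta2) -> in_S1 (snd zeta2) -> Nat.iter n (f_skew E tau) zeta2 = z ->
  word_of E n (fst zeta1) = word_of E n (fst zeta2) -> zeta1 = zeta2.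
Proof.
  destruct hE as [hdE [hlo [hlam [hEdeg hE0]]]].
  destruct zeta1 as [p1 s1], zeta2 as [p2 s2]; simpl. intros Hz Hp1 Hs1 H1 Hp2 Hs2 H2 Hw.
  rewrite (iter_fskew E tau n p1 s1 Hs1) in H1. rewrite (iter_fskew E tau n p2 s2 Hs2) in H2.
  assert (Hp : p1 = p2).
  { rewrite <- (word_of_xw E dE lam ell ext hdE hlo hlam hEdeg hE0 hext n p1 (fst z)); auto.
    rewrite <- (word_of_xw E dE lam ell ext hdE hlo hlam hEdeg hE0 hext n p2 (fst z)); auto.
    congruence. rewrite <- H2; auto. rewrite <- H1; auto. }
  subst p2. f_equal. apply (frac_inj s1 s2 (Cn E tau n p1)); auto.
  rewrite <- H2 in H1. congruence.
Qed.

Definition PRE (E tau : R -> R) n z (zeta : R * R) : Prop :=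
  in_S1 (fst zeta) /\ in_S1 (snd zeta) /\ Nat.iter n (f_skew E tau) zeta = z.

Lemma PRE_code (E dE tau : R -> R) lam ell ext (hE : HypE E dE lam ell) (hext : ext_ok ell ext) n z :
  in_S1 (fst z) ->
  (forall zeta, PRE E tau n z zeta -> (code ell (word_of E n (fst zeta)) < ell ^ n)%nat) /\
  (forall z1 z2, PRE E tau n z z1 -> PRE E tau n z z2 ->
     code ell (word_of E n (fst z1)) = code ell (word_of E n (fst z2)) -> z1 = z2).
Proof.
  intro Hz. pose proof hE as [hdE [hlo [hlam [hEdeg hE0]]]]. split.
  - intros zeta [Hp _]. apply code_lt. apply (word_of_word E dE lam ell hdE hlo hlam hEdeg hE0); auto.
  - intros z1 z2 [A1 [B1 C1]] [A2 [B2 C2]] He.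
    apply (preim_inj E dE tau lam ell ext hE hext n z); auto.
    apply (code_inj ell n); auto; apply (word_of_word E dE lam ell hdE hlo hlam hEdeg hE0); auto.
Qed.

Lemma Ncount_bound (E dE tau dtau : R -> R) lam ell ext K (hE : HypE E dE lam ell) (hext : ext_ok ell ext) n z v :
  in_S1 (fst z) -> (Ncount E tau dE dtau lam K n z v <= ell ^ n)%nat.
Proof.
  intro Hz. destruct (PRE_code E dE tau lam ell ext hE hext n z Hz) as [H1 H2].
  unfold Ncount. apply (fcard_le_N _ (fun zeta => code ell (word_of E n (fst zeta)))).
  - intros x [A [B [C _]]]. apply H1. split; auto.
  - intros x y [A [B [C _]]] [A' [B' [C' _]]]. apply H2; split; auto.
Qed.

Lemma P2count (E dE tau dtau : R -> R) lam ell ext K Rt M (hE : HypE E dE lam ell) (hext : ext_ok ell ext)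
  (hM : forall x, Rabs (dtau x) <= M) (hM0 : 0 <= M) n (Hn : (1 <= n)%nat) z v :
  in_S1 (fst z) -> (fst v) ^ 2 + (snd v) ^ 2 = 1 -> Rt >= theta lam K + theta lam M ->
  (Ncount E tau dE dtau lam K n z v <=
   fcard (fun w => word ell n w /\
     (Rabs (snd v / fst v - Ssum E dE dtau (fst z) (ext w)) <= Rt / dEn E dE n (xw E (fst z) (ext w) n))%R))%nat.
Proof.
  intros Hz Hv HRt. pose proof hE as [hdE [hlo [hlam [hEdeg hE0]]]].
  destruct (Req_dec (fst v) 0) as [Hv1|Hv1].
  - unfold Ncount. rewrite fcard_empty. lia.
    intros [p s] [_ [_ [_ [[xi etaw] [Hc HD]]]]]. rewrite Dfn_formula in HD.
    pose proof (dEn_pos E dE lam hlam hlo n p).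
    assert (xi = 0).
    { assert (dEn E dE n p * xi = 0) by (rewrite <- Hv1, <- HD; reflexivity).
      apply Rmult_integral in H0. destruct H0; lra. }
    subst xi. unfold cone in Hc. simpl in Hc. rewrite Rabs_R0, Rmult_0_r in Hc.
    assert (etaw = 0) by (pose proof (Rabs_pos etaw); destruct (Req_dec etaw 0) as [h|h]; auto; pose proof (Rabs_pos_lt etaw h); lra). subst.
    simpl in Hv. ring_simplify in Hv. lra.
  - unfold Ncount.
    apply (fcard_le2 _ _ (fun zeta => word_of E n (fst zeta)) (code ell) (ell ^ n)).
    + intros w [Hw _]. apply code_lt; auto.
    + intros w1 w2 [H1 _] [H2 _]. apply (code_inj ell n); auto.
    + intros [p s] [Hp [Hs [Hit [[xi etaw] [Hc HD]]]]]. simpl fst.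
      rewrite (iter_fskew E tau n p s Hs) in Hit.
      assert (Hy : Nat.iter n (Ec E) p = fst z) by (rewrite <- Hit; reflexivity).
      pose proof (word_of_word E dE lam ell hdE hlo hlam hEdeg hE0 n p Hp) as Hw.
      split; auto.
      pose proof (word_of_xw E dE lam ell ext hdE hlo hlam hEdeg hE0 hext n p (fst z) Hz Hp Hy) as Hx.
      set (a := ext (word_of E n p)) in *.
      assert (ha : good ell a) by (apply (ext_good ell ext n); auto).
      pose proof (Bn_Psum E dE dtau lam ell hdE hlo hlam hEdeg hE0 a ha (fst z) Hz n) as HB.
      pose proof (Ssum_tail E dE dtau lam ell M hdE hlo hlam hEdeg hE0 hM hM0 a ha (fst z) n Hz Hn) as HT.
      rewrite Hx in HB, HT |- *. rewrite Dfn_formula in HD.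
      apply (arith2 (fst v) (snd v) xi etaw (Bn E dE dtau n p) (dEn E dE n p) (Psum E dE dtau (fst z) a n) _ Rt (theta lam K) (theta lam M)); auto.
      * apply (dEn_pos E dE lam hlam hlo).
      * rewrite <- HD. reflexivity.
      * rewrite <- HD. reflexivity.
    + intros z1 z2 [A1 [B1 [C1 _]]] [A2 [B2 [C2 _]]] He.
      apply (preim_inj E dE tau lam ell ext hE hext n z); auto.
Qed.

Lemma P1count (E dE tau dtau : R -> R) lam ell ext K Rt M (hE : HypE E dE lam ell) (hext : ext_ok ell ext)
  (hM : forall x, Rabs (dtau x) <= M) (hM0 : 0 <= M) n (Hn : (1 <= n)%nat) y eta :
  in_S1 y -> theta lam K - theta lam M >= Rt ->
  (fcard (fun w => word ell n w /\
     (Rabs (eta - Ssum E dE dtau y (ext w)) <= Rt / dEn E dE n (xw E y (ext w) n))%R)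
   <= Ncount E tau dE dtau lam K n (y, 0%R) ((1 / sqrt (1 + eta ^ 2))%R, (eta / sqrt (1 + eta ^ 2))%R))%nat.
Proof.
  intros Hy HRt. pose proof hE as [hdE [hlo [hlam [hEdeg hE0]]]].
  assert (Hz : in_S1 (fst (y, 0))) by exact Hy.
  destruct (PRE_code E dE tau lam ell ext hE hext n (y, 0) Hz) as [Q1 Q2].
  set (sq := sqrt (1 + eta ^ 2)).
  assert (Hsq : 0 < sq) by (apply sqrt_lt_R0; nra).
  unfold Ncount.
  apply (fcard_le2 _ _
    (fun w => (xw E y (ext w) n, frac_part (0 - Cn E tau n (xw E y (ext w) n))))
    (fun zeta => code ell (word_of E n (fst zeta))) (ell ^ n)).
  - intros x [A [B [C _]]]. apply Q1. split; auto.
  - intros x x' [A [B [C _]]] [A' [B' [C' _]]]. apply Q2; split; auto.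
  - intros w [Hw Hineq].
    assert (ha : good ell (ext w)) by (apply (ext_good ell ext n); auto).
    destruct (xw_spec E dE lam ell hdE hlo hlam hEdeg hE0 (ext w) ha y n Hy) as [HI Hit].
    set (p := xw E y (ext w) n) in *.
    assert (Hp : in_S1 p) by apply HI.
    pose proof (Bn_Psum E dE dtau lam ell hdE hlo hlam hEdeg hE0 (ext w) ha y Hy n) as HB.
    pose proof (Ssum_tail E dE dtau lam ell M hdE hlo hlam hEdeg hE0 hM hM0 (ext w) ha y n Hy Hn) as HT.
    fold p in HB, HT.
    pose proof (dEn_pos E dE lam hlam hlo n p) as HD.
    split; [exact Hp|]. split; [apply frac_range|]. split.
    + simpl. rewrite (iter_fskew E tau n p _ (frac_range _)). rewrite Hit.
      f_equal. apply frac_sub_add. lra.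
    + exists (1 / sq / dEn E dE n p, eta / sq - (1 / sq / dEn E dE n p) * Bn E dE dtau n p). split.
      * unfold cone. simpl. rewrite HB.
        apply (arith1 eta _ (Ssum E dE dtau y (ext w)) _ sq Rt _ (theta lam M)); auto.
      * simpl fst. rewrite Dfn_formula. f_equal; field; lra.
  - intros w1 w2 [Hw1 _] [Hw2 _] He. injection He as He _.
    assert (ha1 : good ell (ext w1)) by (apply (ext_good ell ext n); auto).
    assert (ha2 : good ell (ext w2)) by (apply (ext_good ell ext n); auto).
    destruct (xw_spec E dE lam ell hdE hlo hlam hEdeg hE0 (ext w1) ha1 y n Hy) as [[_ I1] _].
    destruct (xw_spec E dE lam ell hdE hlo hlam hEdeg hE0 (ext w2) ha2 y n Hy) as [[_ I2] _].
    rewrite He in I1.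
    apply (word_eq_ext ell ext n); auto. intros k Hk.
    specialize (I1 (n - k)%nat ltac:(lia)). specialize (I2 (n - k)%nat ltac:(lia)).
    replace (n - (n - k))%nat with k in I1, I2 by lia.
    apply (Ij_unique E _ _ _ I1 I2).
Qed.


Theorem mainTheorem8
  (r ell : nat) (E dE tau dtau : R -> R) (lam Lam : R)
  (hr : (2 <= r)%nat) (hell : (2 <= ell)%nat)
  (hE : Cr r E) (hdE : forall x, derivable_pt_lim E x (dE x))
  (hEdeg : forall x, E (x + 1) = E x + INR ell)
  (hE0 : E 0 = 0)
  (hlam : 1 < lam) (hexp : forall x, lam <= dE x <= Lam)
  (htau : Cr r tau) (hdtau : forall x, derivable_pt_lim tau x (dtau x))
  (htau_per : forall x, tau (x + 1) = tau x)
  (ext : list nat -> nat -> nat) (hext : ext_ok ell ext) :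
  (forall K Rt, supnorm dtau < K -> 0 < Rt ->
     theta lam K - theta lam (supnorm dtau) >= Rt ->
     forall n, (1 <= n)%nat ->
       (Ntil E dE dtau ell ext Rt n <= Nf E tau dE dtau lam K n)%nat)
  /\
  (forall K Rt, supnorm dtau < K ->
     Rt > theta lam K + theta lam (supnorm dtau) ->
     forall n, (1 <= n)%nat ->
       (Nf E tau dE dtau lam K n <= Ntil E dE dtau ell ext Rt n)%nat)
  /\
  (Ntau_is E tau dE dtau lam 1 <->
   forall Rt, 0 < Rt ->
     Un_cv (fun n => ln (INR (Ntil E dE dtau ell ext Rt n)) / INR n) 0).
Proof.
  destruct (supnorm_bound r tau dtau hr htau hdtau htau_per) as [hM hM0].
  set (M := supnorm dtau) in *.
  assert (hlo : forall x, lam <= dE x) by (intro x; apply hexp).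
  assert (hH : HypE E dE lam ell) by (repeat split; auto).
  assert (P1 : forall K Rt, M < K -> 0 < Rt -> theta lam K - theta lam M >= Rt ->
     forall n, (1 <= n)%nat -> (Ntil E dE dtau ell ext Rt n <= Nf E tau dE dtau lam K n)%nat).
  { intros K Rt HK HRt Hth n Hn. unfold Ntil. apply natsup_le. intros [y eta] Hy. simpl in Hy |- *.
    eapply Nat.le_trans. apply (P1count E dE tau dtau lam ell ext K Rt M hH hext hM hM0 n Hn y eta Hy Hth).
    unfold Nf.
    apply (natsup_ge _ (fun zv => Ncount E tau dE dtau lam K n (fst zv) (snd zv)) (ell ^ n)
      ((y, 0), (1 / sqrt (1 + eta ^ 2), eta / sqrt (1 + eta ^ 2)))).
    - intros [z v] [Hz _]. apply (Ncount_bound E dE tau dtau lam ell ext K hH hext); auto.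
    - simpl fst. simpl snd. split; [exact Hy|]. split; [unfold in_S1; lra|].
      replace (eta * (eta * 1)) with (eta ^ 2) by ring.
      set (sq := sqrt (1 + eta ^ 2)).
      assert (Hsq : 0 < sq) by (apply sqrt_lt_R0; nra).
      assert (Hs2 : sq * sq = 1 + eta ^ 2) by (apply sqrt_sqrt; nra).
      replace ((1 / sq) ^ 2 + (eta / sq) ^ 2) with ((1 + eta ^ 2) / (sq * sq)) by (field; lra).
      rewrite Hs2. field. nra. }
  assert (P2 : forall K Rt, M < K -> Rt > theta lam K + theta lam M ->
     forall n, (1 <= n)%nat -> (Nf E tau dE dtau lam K n <= Ntil E dE dtau ell ext Rt n)%nat).
  { intros K Rt HK HRt n Hn. unfold Nf. apply natsup_le. intros [z v] [Hz1 [Hz2 Hv]]. simpl.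
    eapply Nat.le_trans. apply (P2count E dE tau dtau lam ell ext K Rt M hH hext hM hM0 n Hn z v Hz1 Hv). lra.
    unfold Ntil. apply (natsup_ge _ (fun ye : R * R => fcard (fun w => word ell n w /\
         (Rabs (snd ye - Ssum E dE dtau (fst ye) (ext w)) <= Rt / dEn E dE n (xw E (fst ye) (ext w) n))%R)) (ell ^ n) (fst z, snd v / fst v)).
    - intros [y eta] _. apply words_bound.
    - exact Hz1. }
  split; [exact P1|]. split; [exact P2|].
  split.
  - intros HN Rt HRt.
    set (K := M + Rt * (lam - 1)).
    assert (HK : M < K) by (unfold K; nra).
    assert (Hth : theta lam K - theta lam M >= Rt) by (unfold theta, K; apply Req_ge; field; lra).
    specialize (HN K HK).
    pose proof (continuity_seq ln _ 1 cont_ln1 HN) as HL. rewrite ln_1 in HL.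
    refine (squeeze0 _ _ _ HL).
    intros n Hn. simpl. rewrite ln_Rpower.
    pose proof (ln_INR_mono _ _ (P1 K Rt HK HRt Hth n Hn)).
    assert (0 < / INR n) by (apply Rinv_0_lt_compat; apply (lt_INR 0); lia).
    unfold Rdiv. split; nra.
  - intros HT K HK.
    assert (HK0 : 0 <= K) by (unfold M in *; lra).
    assert (HthK : 0 <= theta lam K) by (unfold theta; apply Rmult_le_pos; [lra| left; apply Rinv_0_lt_compat; lra]).
    assert (HthM : 0 <= theta lam M) by (unfold theta; apply Rmult_le_pos; [lra| left; apply Rinv_0_lt_compat; lra]).
    set (Rt := theta lam K + theta lam M + 1).
    specialize (HT Rt ltac:(unfold Rt; lra)).
    replace 1 with (exp 0) by apply exp_0. unfold Rpower.
    apply (continuity_seq exp (fun n => / INR n * ln (INR (Nf E tau dE dtau lam K n)))).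
    apply cont_exp.
    refine (squeeze0 _ _ _ HT).
    intros n Hn.
    pose proof (ln_INR_mono _ _ (P2 K Rt HK ltac:(unfold Rt; lra) n Hn)).
    assert (0 < / INR n) by (apply Rinv_0_lt_compat; apply (lt_INR 0); lia).
    unfold Rdiv. split; nra.
Qed.
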